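(* Let $G=(V,E)$ be a finite graph satisfying the $CD\psi(n,-K)$ condition for some $n>0$, $K>0$, where $\psi:(0,+\infty)\to\mathbb R$ is a $C^1$ concave function with $\psi'(1)=0$. Let $\sigma\in\mathbb R$ and $c:[0,\infty)\to\mathbb R$ continuous with either ($c\ge0$, $\sigma\le1$) or ($c\le0$, $\sigma\ge1$), and let $u$ be a positive solution of $\partial_tu=\Delta u+c(t)u^\sigma$ on $V$. Fix $0<\alpha<1$. Then for all vertices and all $t>0$, $$(1-\alpha)\Gamma^\psi(u)\le\frac{n}{2(1-\alpha)t}+\frac{Kn}{2\alpha}.$$
   Context: Graphs: $G=(V,E)$ is a connected, locally finite graph; each edge $xy$ carries a weight $w_{xy}>0$ (possibly asymmetric), and $\mu:V\to(0,\infty)$ is a vertex measure; $y\sim x$ means $xy\in E$. Laplacian: $\Delta f(x)=\frac{1}{\mu(x)}\sum_{y\sim x}w_{xy}(f(y)-f(x))$. For $f:V\to(0,\infty)$: $\Delta^\psi f(x)=\Delta\big[\psi\big(\tfrac{f}{f(x)}\big)\big](x)$; $\overline\psi(s)=\psi'(1)(s-1)-(\psi(s)-\psi(1))$, $\Gamma^\psi f=\Delta^{\overline\psi}f$; $(\Omega^\psi f)(x)=\Delta\big[\psi'\big(\tfrac{f}{f(x)}\big)\tfrac{f}{f(x)}\big(\tfrac{\Delta f}{f}-\tfrac{\Delta f(x)}{f(x)}\big)\big](x)$; $2\Gamma_2^\psi(f)=\Omega^\psi f+\frac{\Delta f\,\Delta^\psi f}{f}-\frac{\Delta(f\Delta^\psi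 f)}{f}$. $CD\psi(n,K)$: for every $f:V\to(0,\infty)$ and every vertex, $\Gamma_2^\psi(f)\ge\frac1n(\Delta^\psi f)^2+K\Gamma^\psi(f)$. A positive solution $u:V\times[0,\infty)\to(0,\infty)$ is continuously differentiable in $t$; operators are applied to $u(\cdot,t)$ at each fixed time. *)

(* Defs.v *)
From HB Require Import structures.
From mathcomp Require Import all_boot all_order all_algebra.
From mathcomp Require Import all_classical all_reals all_analysis.
Set Implicit Arguments. Unset Strict Implicit. Unset Printing Implicit Defensive.
Import Order.TTheory GRing.Theory Num.Theory numFieldNormedType.Exports.
Local Open Scope ring_scope.

Section GraphOps.
Variables (R : realType) (V : finType).
(* Graph data: symmetric adjacency [adj], edge weights [w] (possibly asymmetric,
   positive on edges), vertex measure [mu]. *)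
Variables (adj : rel V) (w : V -> V -> R) (mu : V -> R).

Definition Lap (f : V -> R) (x : V) : R :=
  (mu x)^-1 * \sum_(y | adj x y) w x y * (f y - f x).

Definition LapPsi (psi : R -> R) (f : V -> R) (x : V) : R :=
  Lap (fun z => psi (f z / f x)) x.

Definition psibar (psi : R -> R) (s : R) : R :=
  derive1 psi 1 * (s - 1) - (psi s - psi 1).

Definition GammaPsi (psi : R -> R) (f : V -> R) (x : V) : R :=
  LapPsi (psibar psi) f x.

Definition OmegaPsi (psi : R -> R) (f : V -> R) (x : V) : R :=
  Lap (fun z => derive1 psi (f z / f x) * (f z / f x)
                  * (Lap f z / f z - Lap f x / f x)) x.

Definition Gamma2Psi (psi : R -> R) (f : V -> R) (x : V) : R :=
  (OmegaPsi psi f x + Lap f x * LapPsi psi f x / f x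
    - Lap (fun z => f z * LapPsi psi f z) x / f x) / 2.

Definition CDpsi (psi : R -> R) (n K : R) : Prop :=
  forall (f : V -> R), (forall z, 0 < f z) ->
    forall x, Gamma2Psi psi f x >= n^-1 * (LapPsi psi f x) ^+ 2 + K * GammaPsi psi f x.

End GraphOps.

Definition weighted_graph (R : realType) (V : finType) (adj : rel V)
    (w : V -> V -> R) (mu : V -> R) : Prop :=
  [/\ symmetric adj, irreflexive adj,
      (forall x y, connect adj x y),
      (forall x y, adj x y -> 0 < w x y) &
      (forall x, 0 < mu x)].

Definition C1_concave_pos (R : realType) (psi : R -> R) : Prop :=
  [/\ (forall s : R, 0 < s -> derivable psi s 1),
      {in `]0, +oo[, continuous (derive1 psi)} &
      (forall a b t : R, 0 < a -> 0 < b -> 0 <= t <= 1 ->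
         t * psi a + (1 - t) * psi b <= psi (t * a + (1 - t) * b))].

(* Main.v *)
Require Import Defs.
From HB Require Import structures.
From mathcomp Require Import all_boot all_order all_algebra.
From mathcomp Require Import all_classical all_reals all_analysis.
From mathcomp Require Import ring lra.
Import Order.TTheory GRing.Theory Num.Theory numFieldNormedType.Exports.
Local Open Scope ring_scope.

Section S.
Variable R : realType.
Local Open Scope classical_set_scope.

Lemma der_right_ge (f : R -> R) a m d : derivable f a 1 -> 0 < d ->
  (forall h, 0 < h < d -> m <= h^-1 * (f (h + a) - f a)) -> m <= f^`() a.
Proof.
move=> df d0 H; rewrite derive1E ['D_1 f a]cvg_at_rightE; last exact: df.
apply: limr_ge.
  rewrite -(cvg_at_rightE (fun h : R => h^-1 *: ((f \o shift a) _ - f a))) //.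
  apply: cvg_trans df; apply: cvg_app.
  move=> A [e egt0 Ae]; exists e => // x xe xgt0; apply: Ae => //.
  exact/lt0r_neq0.
near=> h; rewrite /= [_%:A]mulr1; apply: H; apply/andP; split.
  by near: h; exists 1 => /=.
near: h; exists d => // h /=; rewrite distrC subr0 => /(le_lt_trans (ler_norm _)).
by [].
Unshelve. all: by end_near. Qed.

Lemma der_right_le (f : R -> R) a m d : derivable f a 1 -> 0 < d ->
  (forall h, 0 < h < d -> h^-1 * (f (h + a) - f a) <= m) -> f^`() a <= m.
Proof.
move=> df d0 H; rewrite derive1E ['D_1 f a]cvg_at_rightE; last exact: df.
apply: limr_le.
  rewrite -(cvg_at_rightE (fun h : R => h^-1 *: ((f \o shift a) _ - f a))) //.
  apply: cvg_trans df; apply: cvg_app.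
  move=> A [e egt0 Ae]; exists e => // x xe xgt0; apply: Ae => //.
  exact/lt0r_neq0.
near=> h; rewrite /= [_%:A]mulr1; apply: H; apply/andP; split.
  by near: h; exists 1 => /=.
near: h; exists d => // h /=; rewrite distrC subr0 => /(le_lt_trans (ler_norm _)).
by [].
Unshelve. all: by end_near. Qed.

Lemma der_left_ge (f : R -> R) a m d : derivable f a 1 -> 0 < d ->
  (forall h, - d < h < 0 -> m <= h^-1 * (f (h + a) - f a)) -> m <= f^`() a.
Proof.
move=> df d0 H; rewrite derive1E ['D_1 f a]cvg_at_leftE; last exact: df.
apply: limr_ge.
  rewrite -(cvg_at_leftE (fun h : R => h^-1 *: ((f \o shift a) _ - f a))) //.
  apply: cvg_trans df; apply: cvg_app.
  move=> A [e egt0 Ae]; exists e => // x xe xgt0; apply: Ae => //.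
  exact/ltr0_neq0.
near=> h; rewrite /= [_%:A]mulr1; apply: H; apply/andP; split; last first.
  by near: h; exists 1 => /=.
near: h; exists d => // h /=; rewrite distrC subr0 => /ltr_normlP [].
by rewrite ltrNl.
Unshelve. all: by end_near. Qed.

Lemma der_left_le (f : R -> R) a m d : derivable f a 1 -> 0 < d ->
  (forall h, - d < h < 0 -> h^-1 * (f (h + a) - f a) <= m) -> f^`() a <= m.
Proof.
move=> df d0 H; rewrite derive1E ['D_1 f a]cvg_at_leftE; last exact: df.
apply: limr_le.
  rewrite -(cvg_at_leftE (fun h : R => h^-1 *: ((f \o shift a) _ - f a))) //.
  apply: cvg_trans df; apply: cvg_app.
  move=> A [e egt0 Ae]; exists e => // x xe xgt0; apply: Ae => //.
  exact/ltr0_neq0.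
near=> h; rewrite /= [_%:A]mulr1; apply: H; apply/andP; split; last first.
  by near: h; exists 1 => /=.
near: h; exists d => // h /=; rewrite distrC subr0 => /ltr_normlP [].
by rewrite ltrNl.
Unshelve. all: by end_near. Qed.
End S.


Section S2.
Variable R : realType.
Local Open Scope classical_set_scope.
Variable psi : R -> R.
Hypothesis Hc : C1_concave_pos psi.
Hypothesis H1 : derive1 psi 1 = 0.

Lemma three a b c : 0 < a -> a < b -> b < c ->
  (c - b) * psi a + (b - a) * psi c <= (c - a) * psi b.
Proof.
case: Hc => _ _ cc => a0 ab bc.
have ca : 0 < c - a by lra.
set t := (c - b) / (c - a).
have key := cc a c t a0 (lt_trans a0 (lt_trans ab bc)).
have e1 : t * a + (1 - t) * c = b by rewrite /t; field; lra.
have e2 : (c - b) * psi a + (b - a) * psi c = (c - a) * (t * psi a + (1 - t) * psi c).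
  by rewrite /t; field; lra.
rewrite e2 ler_pM2l // -e1; apply: key; apply/andP; split.
  by rewrite /t; apply: divr_ge0; lra.
by rewrite /t ler_pdivrMr // mul1r; lra.
Qed.

Lemma qle (h d X Y : R) : 0 < h -> 0 < d -> d * X <= h * Y -> h^-1 * X <= Y / d.
Proof.
move=> h0 d0 H.
have -> : h^-1 * X = (d * X) / (h * d) by field; apply/andP; split; lra.
have -> : Y / d = (h * Y) / (h * d) by field; apply/andP; split; lra.
by apply: ler_wpM2r => //; rewrite invr_ge0; nra.
Qed.

Lemma qge (h d X Y : R) : h < 0 -> 0 < d -> d * X <= h * Y -> Y / d <= h^-1 * X.
Proof.
move=> h0 d0 H.
have -> : h^-1 * X = (- (d * X)) / (- (h * d)) by field; apply/andP; split; lra.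
have -> : Y / d = (- (h * Y)) / (- (h * d)) by field; apply/andP; split; lra.
by apply: ler_wpM2r; [rewrite invr_ge0; nra | lra].
Qed.

Lemma psi_le1 s : 0 < s -> psi s <= psi 1.
Proof.
case: Hc => dpsi _ _ s0.
case: (ltgtP s 1) => [s1|s1|->] //.
- have : derive1 psi 1 <= (psi 1 - psi s) / (1 - s).
    apply: (@der_right_le R psi 1 _ 1) => //; first exact: dpsi.
    move=> h /andP[h0 _].
    have := @three s 1 (h + 1) s0 s1 ltac:(lra) => t.
    apply: qle => //; first lra.
    lra.
  rewrite H1 => h; have : 0 <= psi 1 - psi s.
    by move: h; rewrite ler_pdivlMr ?mul0r //; lra.
  lra.
- have : (psi s - psi 1) / (s - 1) <= derive1 psi 1.
    apply: (@der_left_ge R psi 1 _ 1) => //; first exact: dpsi.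
    move=> h /andP[h1 h0].
    have := @three (h + 1) 1 s ltac:(lra) ltac:(lra) s1 => t.
    apply: qge => //; first lra.
    lra.
  rewrite H1 => h; have : psi s - psi 1 <= 0.
    by move: h; rewrite ler_pdivrMr ?mul0r //; lra.
  lra.
Qed.

Lemma dpsi_ge0 s : 0 < s -> s <= 1 -> 0 <= derive1 psi s.
Proof.
case: Hc => dpsi _ _ s0; rewrite le_eqVlt => /orP[/eqP->|s1]; first by rewrite H1.
apply: (@der_right_ge R psi s _ (1 - s)) => //; first exact: dpsi.
  lra.
move=> h /andP[h0 hs].
have := @three s (h + s) 1 s0 ltac:(lra) ltac:(lra) => t.
have := @psi_le1 s s0 => p1.
rewrite pmulr_rge0 ?invr_gt0 //.
nra.
Qed.

Lemma dpsi_le0 s : 1 <= s -> derive1 psi s <= 0.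
Proof.
case: Hc => dpsi _ _; rewrite le_eqVlt => /orP[/eqP<-|s1]; first by rewrite H1.
apply: (@der_left_le R psi s _ (s - 1)) => //; first (apply: dpsi; lra).
  lra.
move=> h /andP[h1 h0].
have := @three 1 (h + s) s ltr01 ltac:(lra) ltac:(lra) => t.
have := @psi_le1 s ltac:(lra) => p1.
rewrite nmulr_rle0 ?invr_lt0 //.
nra.
Qed.
End S2.

Set Implicit Arguments. Unset Strict Implicit.

Section Pow.
Variable R : realType.
Lemma powdiv (a s : R) : 0 < a -> a `^ s / a = a `^ (s - 1).
Proof. move=> a0; rewrite powRB; last by rewrite (gt_eqF a0) implybT. by rewrite powRr1 // ltW. Qed.

Lemma mono_pow (a b cc sigma : R) : 0 < a -> a <= b ->
  ((0 <= cc /\ sigma <= 1) \/ (cc <= 0 /\ 1 <= sigma)) ->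
  cc * (b `^ sigma / b) <= cc * (a `^ sigma / a).
Proof.
move=> a0 ab hc; have b0 : 0 < b by apply: lt_le_trans ab.
rewrite !powdiv //.
case: hc => [[c0 s1]|[c0 s1]].
- apply: ler_wpM2l => //.
  have -> : sigma - 1 = - (1 - sigma) by ring.
  rewrite !powRN lef_pV2 ?posrE ?powR_gt0 //.
  apply: ge0_ler_powR => //; [lra | by rewrite nnegrE ltW | by rewrite nnegrE ltW].
- apply: ler_wnM2l => //.
  apply: ge0_ler_powR => //; [lra | by rewrite nnegrE ltW | by rewrite nnegrE ltW].
Qed.
End Pow.

Section Graph.
Variables (R : realType) (V : finType) (adj : rel V) (w : V -> V -> R) (mu : V -> R) (psi : R -> R).
Hypothesis Hc : C1_concave_pos psi.
Hypothesis H1 : derive1 psi 1 = 0.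

Definition Hq (f : V -> R) x :=
  (mu x)^-1 * \sum_(y | adj x y) w x y * (psi 1 - psi (f y / f x)).
Definition Dq (f g : V -> R) x :=
  (mu x)^-1 * \sum_(y | adj x y) w x y *
     (- (derive1 psi (f y / f x) * (f y / f x) * (g y / f y - g x / f x))).

Lemma LapPsiE f x : f x != 0 -> LapPsi adj w mu psi f x = - Hq f x.
Proof.
move=> fx; rewrite /LapPsi /Lap /Hq -mulrN -sumrN; congr (_ * _).
by apply: eq_bigr => y _; rewrite divff //; ring.
Qed.

Lemma GammaPsiE f x : f x != 0 -> GammaPsi adj w mu psi f x = Hq f x.
Proof.
move=> fx; rewrite /GammaPsi /LapPsi /Lap /Hq /psibar H1; congr (_ * _).
by apply: eq_bigr => y _; rewrite divff //; ring.
Qed.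

Lemma rterm_ge0 a b cc sigma : 0 < a -> 0 < b ->
  ((0 <= cc /\ sigma <= 1) \/ (cc <= 0 /\ 1 <= sigma)) ->
  0 <= derive1 psi (a / b) * (a / b) * (cc * (a `^ sigma / a) - cc * (b `^ sigma / b)).
Proof.
move=> a0 b0 hc; have q0 : 0 < a / b by apply: divr_gt0.
case: (lerP a b) => ab.
- apply: mulr_ge0; first apply: mulr_ge0 => //.
  + by apply: (@dpsi_ge0 R psi Hc H1) => //; rewrite ler_pdivrMr // mul1r.
  + exact: ltW.
  + by rewrite subr_ge0; apply: mono_pow.
- apply: mulr_le0; first apply: mulr_le0_ge0.
  + by apply: (@dpsi_le0 R psi Hc H1); rewrite ler_pdivlMr // mul1r ltW.
  + exact: ltW.
  + by rewrite subr_le0; apply: mono_pow => //; apply: ltW.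
Qed.

Lemma key (n K cc sigma : R) (f g : V -> R) x :
  0 < n -> (forall z, 0 < f z) ->
  (forall z, g z = Lap adj w mu f z + cc * f z `^ sigma) ->
  ((0 <= cc /\ sigma <= 1) \/ (cc <= 0 /\ 1 <= sigma)) ->
  (forall y, adj x y -> 0 < w x y) -> 0 < mu x ->
  n^-1 * (LapPsi adj w mu psi f x) ^+ 2 + (- K) * GammaPsi adj w mu psi f x
    <= Gamma2Psi adj w mu psi f x ->
  (forall y, adj x y -> Hq f y <= Hq f x) ->
  Dq f g x <= - (2 / n) * (Hq f x) ^+ 2 + 2 * K * Hq f x.
Proof.
move=> n0 fpos hg hc wpos mu0 CD hmax.
have fne z : f z != 0 by rewrite gt_eqF.
set H := Hq f x.
set Om := OmegaPsi adj w mu psi f x.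
set Rt := (mu x)^-1 * \sum_(y | adj x y) w x y * (derive1 psi (f y / f x) * (f y / f x)
   * (cc * (f y `^ sigma / f y) - cc * (f x `^ sigma / f x))).
set S := (mu x)^-1 * \sum_(y | adj x y) w x y * (f y / f x * (Hq f y - Hq f x)).
have eD : Dq f g x + Om + Rt = 0.
  rewrite /Dq /Om /OmegaPsi /Lap /Rt -!mulrDr -!big_split /=.
  rewrite big1 ?mulr0 // => y _; rewrite (hg y) (hg x) divff // subrr mulr0 subr0.
  rewrite /Lap. by ring.
have eG : Gamma2Psi adj w mu psi f x = (Om + S) / 2.
  rewrite /Gamma2Psi (@LapPsiE f x (fne x)); congr (_ / 2); rewrite -addrA; congr (_ + _); rewrite /S /Lap.
  rewrite -!mulrA -mulrBr; congr (_ * _); rewrite !mulr_suml -sumrB.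
  apply: eq_bigr => y _; rewrite !LapPsiE //.
  by field.
have Rt0 : 0 <= Rt.
  apply: mulr_ge0; first by rewrite invr_ge0 ltW.
  apply: sumr_ge0 => y ay; apply: mulr_ge0; first exact/ltW/wpos.
  by apply: rterm_ge0.
have S0 : S <= 0.
  rewrite /S -oppr_ge0 -mulrN -sumrN; apply: mulr_ge0; first by rewrite invr_ge0 ltW.
  apply: sumr_ge0 => y ay; rewrite -mulrN; apply: mulr_ge0; first exact/ltW/wpos.
  rewrite -mulrN; apply: mulr_ge0; first by apply: divr_ge0; apply: ltW.
  by rewrite oppr_ge0 subr_le0; apply: hmax.
move: CD; rewrite eG LapPsiE // GammaPsiE // -/H => CD.
have -> : Dq f g x = - Om - Rt by lra.
have : n^-1 * H ^+ 2 * 2 - 2 * K * H <= Om by rewrite sqrrN in CD; lra.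
rewrite mulrC mulrA (mulrC 2); lra.
Qed.
End Graph.


Section Der.
Variable R : realType.

Lemma is_derive_comp1 (q psi : R -> R) (t dq : R) :
  is_derive t 1 q dq -> derivable psi (q t) 1 ->
  is_derive t 1 (fun s => psi (q s)) (derive1 psi (q t) * dq).
Proof.
move=> [dq1 <-] dpsi; apply: DeriveDef.
  apply/derivable1_diffP; apply: (@differentiable_comp _ _ _ _ q psi).
    exact/derivable1_diffP.
  exact/derivable1_diffP.
by have := derive1_comp dq1 dpsi; rewrite !derive1E => ->.
Qed.

Lemma is_derive_bigsum (I : eqType) (r : seq I) (P : pred I) (f : I -> R -> R)
  (df : I -> R) (t : R) :
  (forall i, P i -> is_derive t 1 (f i) (df i)) ->
  is_derive t 1 (fun s => \sum_(i <- r | P i) f i s) (\sum_(i <- r | P i) df i).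
Proof.
move=> hd; elim: r => [|i r IH].
  rewrite big_nil.
  have -> : (fun s => \sum_(i <- [::] | P i) f i s) = cst 0.
    by apply/funext => s; rewrite big_nil.
  exact: is_derive_cst.
rewrite big_cons; case: (boolP (P i)) => Pi.
  have := is_deriveD (hd i Pi) IH => hh.
  have -> : (fun s => \sum_(j <- i :: r | P j) f j s) =
     (f i + (fun s => \sum_(j <- r | P j) f j s)).
    by apply/funext => s; rewrite big_cons Pi.
  exact: hh.
have -> : (fun s => \sum_(j <- i :: r | P j) f j s) =
     (fun s => \sum_(j <- r | P j) f j s).
  by apply/funext => s; rewrite big_cons (negbTE Pi).
exact: IH.
Qed.
End Der.

Lemma alg1 (R : realType) (a b d e p W : R) : a != 0 -> b != 0 ->
  W * - (p * (a * (- b ^- 2 * d) + b^-1 * e)) = W * - (p * (a / b) * (e / a - d / b)).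
Proof. by move=> a0 b0; field; apply/andP. Qed.

Section Time.
Variables (R : realType) (V : finType) (adj : rel V) (w : V -> V -> R) (mu : V -> R) (psi : R -> R) (u : V -> R -> R).
Hypothesis Hc : C1_concave_pos psi.
Hypothesis upos : forall x t, 0 < t -> 0 < u x t.
Hypothesis uder : forall x t, 0 < t -> derivable (u x) t 1.

Lemma is_derive_ext (f g : R -> R) (t d : R) :
  (forall s, f s = g s) -> is_derive t 1 f d -> is_derive t 1 g d.
Proof. by move=> e; have -> : g = f by apply/funext => s; rewrite e. Qed.

Definition Ah (x : V) (t : R) := Hq adj w mu psi (fun y => u y t) x.

Lemma derA (x : V) (t : R) : 0 < t ->
  is_derive t 1 (Ah x) (Dq adj w mu psi (fun y => u y t) (fun y => derive1 (u y) t) x).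
Proof.
move=> t0.
have du z : is_derive t 1 (u z) (derive1 (u z) t).
  by rewrite derive1E; apply: derivableP; apply: uder.
have uxne : u x t != 0 by rewrite gt_eqF // upos.
have dq y : is_derive t 1 (fun s => u y s / u x s)
   (u y t * (- (u x t) ^- 2 * derive1 (u x) t) + (u x t)^-1 * derive1 (u y) t).
  have := is_deriveM (du y) (is_deriveV uxne (du x)).
  by apply: is_derive_ext.
have dterm y : is_derive t 1 (fun s => w x y * (psi 1 - psi (u y s / u x s)))
   (w x y * (0 - derive1 psi (u y t / u x t) *
      (u y t * (- (u x t) ^- 2 * derive1 (u x) t) + (u x t)^-1 * derive1 (u y) t))).
  have hp : derivable psi (u y t / u x t) 1.
    case: Hc => dp _ _; apply: dp; apply: divr_gt0; exact: upos.
  have := is_deriveZ (w x y) (is_deriveB (is_derive_cst (psi 1) t 1) (is_derive_comp1 (dq y) hp)).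
  by apply: is_derive_ext.
have ds := @is_derive_bigsum R V (index_enum V) (adj x) _ _ t (fun i _ => dterm i).
have := is_deriveZ (mu x)^-1 ds.
rewrite /Ah /Hq /Dq.
move=> h; apply: (is_derive_eq (is_derive_ext _ h)) => //=.
congr (_ * _); apply: eq_bigr => y ay; rewrite sub0r.
have uyne : u y t != 0 by rewrite gt_eqF // upos.
by apply: alg1.
Qed.
End Time.


Lemma ge1_div (R : realType) (x y : R) : 0 < y -> y <= x -> 1 <= x / y.
Proof. by move=> y0 yx; rewrite ler_pdivlMr // mul1r. Qed.

Lemma fin (R : realType) (a n K T G : R) : 0 < a -> a < 1 -> 0 < n -> 0 < K -> 0 < T ->
  (T - a ^+ 2 * T) * G <= n / 2 + n * K * T ->
  (1 - a) * G <= n / (2 * (1 - a) * T) + K * n / (2 * a).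
Proof.
move=> a0 a1 n0 K0 T0 h.
have p : 0 < T * (1 + a) by apply: mulr_gt0; lra.
rewrite -(ler_pM2l p).
have -> : T * (1 + a) * ((1 - a) * G) = (T - a ^+ 2 * T) * G by ring.
apply: (le_trans h).
have -> : T * (1 + a) * (n / (2 * (1 - a) * T) + K * n / (2 * a)) =
   n / 2 * ((1 + a) / (1 - a)) + n * K * T * ((1 + a) / (2 * a)).
  by field; rewrite ?gt_eqF //; lra.
apply: lerD; apply: ler_peMr.
- by apply: divr_ge0; lra.
- by apply: ge1_div; lra.
- by apply: mulr_ge0; [apply: mulr_ge0|]; lra.
- by apply: ge1_div; lra.
Qed.


Theorem mainTheorem12 (R : realType) (V : finType) (adj : rel V)
    (w : V -> V -> R) (mu : V -> R) (psi : R -> R) (n K : R)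
    (sigma : R) (c : R -> R) (u : V -> R -> R) (alpha : R) :
  weighted_graph adj w mu ->
  C1_concave_pos psi -> derive1 psi 1 = 0 ->
  0 < n -> 0 < K ->
  CDpsi adj w mu psi n (- K) ->
  {within `[0, +oo[, continuous c}%classic ->
  ((forall t, 0 <= t -> 0 <= c t) /\ sigma <= 1 \/
   (forall t, 0 <= t -> c t <= 0) /\ 1 <= sigma) ->
  (* u is a positive solution of ∂_t u = Δu + c(t) u^σ on V × [0,∞) *)
  (forall x t, 0 <= t -> 0 < u x t) ->
  (forall x, {within `[0, +oo[, continuous (u x)}%classic) ->
  (forall x t, 0 < t -> derivable (u x) t 1) ->
  (forall x, {in `]0, +oo[, continuous (derive1 (u x))}) ->
  (forall x t, 0 < t ->
     derive1 (u x) t = Lap adj w mu (fun y => u y t) x + c t * (u x t) `^ sigma) ->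
  0 < alpha < 1 ->
  forall x t, 0 < t ->
    (1 - alpha) * GammaPsi adj w mu psi (fun y => u y t) x
      <= n / (2 * (1 - alpha) * t) + K * n / (2 * alpha).
Proof.
move=> [adjsym adjirr conn wpos mupos] Hc H1 n0 K0 CD _ hcase upos0 _ uder _ hode
  /andP[a0 a1] x T T0.
have upos : forall x t, 0 < t -> 0 < u x t by move=> y s s0; apply: upos0; exact: ltW.
set eps := alpha ^+ 2 * T.
have e0 : 0 < eps by rewrite /eps; apply: mulr_gt0 => //; apply: exprn_gt0.
have eT : eps < T.
  rewrite /eps -[X in _ < X]mul1r ltr_pM2r //.
  by rewrite expr2; nra.
pose E y s := (s - eps) * Ah adj w mu psi u y s.
have dE : forall (y : V) (s : R), 0 < s -> is_derive s 1 (E y)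
    (Ah adj w mu psi u y s + (s - eps) *
      Dq adj w mu psi (fun z => u z s) (fun z => derive1 (u z) s) y).
  move=> y s s0.
  have h1 := derA adj w mu Hc upos uder y s0.
  have h0 : is_derive s 1 (fun r : R => r - eps) 1.
    have := is_deriveB (is_derive_id s (1 : R)) (is_derive_cst eps s 1).
    rewrite subr0; exact: is_derive_ext.
  have := is_deriveM h0 h1.
  move=> h; apply: (is_derive_eq (is_derive_ext _ h)) => //=.
  by rewrite /GRing.scale /= mulr1 addrC.
have cE : forall y, {within `[eps, T], continuous (E y)}%classic.
  move=> y; apply: derivable_within_continuous => s; rewrite in_itv /= => /andP[s1 _].
  have s0 : 0 < s by apply: lt_le_trans s1.
  by case: (dE y s s0).
have tm : forall y : V, {t : R | t \in `[eps, T] & forall s, s \in `[eps, T] -> E y s <= E y t}.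
  by move=> y; apply: cid2; apply: EVT_max; [exact: ltW | exact: cE].
pose M y := E y (s2val (tm y)).
have [x0 _ hx0] : exists2 x0 : V, true & forall y, M y <= M x0.
  by case: (@arg_maxP _ _ V x xpredT M isT) => x0 _ h; exists x0 => // y; exact: h.
set t0 := s2val (tm x0).
have t0I : t0 \in `[eps, T] := s2valP (tm x0).
have gmax : forall (y : V) (s : R), s \in `[eps, T] -> E y s <= E x0 t0.
  by move=> y s hs; apply: le_trans (s2valP' (tm y) s hs) (hx0 y).
have bound : E x0 t0 <= n / 2 + n * K * T.
  rewrite leNgt; apply/negP => hlt.
  move: (t0I); rewrite in_itv /= => /andP[t0lo t0hi].
  have t0pos : 0 < t0 by apply: lt_le_trans t0lo.
  have bpos : 0 < n / 2 + n * K * T.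
    by apply: addr_gt0; [apply: divr_gt0 | apply: mulr_gt0; [apply: mulr_gt0|]].
  have M0 : 0 < E x0 t0 by apply: lt_trans hlt.
  have tpos : 0 < t0 - eps.
    rewrite lt_neqAle subr_ge0 t0lo andbT; apply/eqP => h.
    by move: M0; rewrite /E -h mul0r ltxx.
  set Hx := Ah adj w mu psi u x0 t0.
  have Hx0 : 0 < Hx by move: M0; rewrite /E pmulr_rgt0.
  have nb : forall y, adj x0 y -> Hq adj w mu psi (fun z => u z t0) y <= Hx.
    move=> y _; have := gmax y t0 t0I; rewrite /E ler_pM2l //.
  have hc' : (0 <= c t0 /\ sigma <= 1) \/ (c t0 <= 0 /\ 1 <= sigma).
    case: hcase => [[h s]|[h s]]; [left|right]; split => //; apply: h; exact: ltW.
  have kk := key Hc H1 (cc := c t0) (g := fun z => derive1 (u z) t0) n0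
     (fun z => upos z t0 t0pos) (fun z => hode z t0 t0pos) hc' (wpos x0) (mupos x0)
     (CD _ (fun z => upos z t0 t0pos) x0) nb.
  set D := Dq adj w mu psi (fun z => u z t0) (fun z => derive1 (u z) t0) x0 in kk.
  have dEx : derivable (E x0) t0 1 by case: (dE x0 t0 t0pos).
  have hq : forall h, - (t0 - eps) < h < 0 -> 0 <= h^-1 * (E x0 (h + t0) - E x0 t0).
    move=> h /andP[h1 h2].
    rewrite nmulr_rge0 ?invr_lt0 // subr_le0; apply: gmax.
    by rewrite in_itv /=; apply/andP; split; lra.
  have fer : 0 <= derive1 (E x0) t0 := @der_left_ge R (E x0) t0 0 (t0 - eps) dEx tpos hq.
  have dval : derive1 (E x0) t0 = Hx + (t0 - eps) * D.
    by rewrite derive1E; apply: derive_val; exact: dE.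
  rewrite dval in fer.
  set P := t0 - eps in tpos fer hlt.
  have s1 : 0 <= Hx + P * (- (2 / n) * Hx ^+ 2 + 2 * K * Hx).
    apply: (le_trans fer); rewrite lerD2l; apply: ler_wpM2l => //; exact: ltW.
  have s2 : 0 <= 1 - (2 / n) * (P * Hx) + 2 * K * P.
    have e : Hx + P * (- (2 / n) * Hx ^+ 2 + 2 * K * Hx) =
       Hx * (1 - (2 / n) * (P * Hx) + 2 * K * P) by ring.
    by rewrite e pmulr_rge0 in s1.
  have s3 : (2 / n) * (P * Hx) <= 1 + 2 * K * T.
    have : K * P <= K * T by apply: ler_wpM2l; [exact: ltW | rewrite /P; lra].
    lra.
  have s4 : P * Hx <= n / 2 * (1 + 2 * K * T).
    have e : P * Hx = n / 2 * ((2 / n) * (P * Hx)) by field; rewrite gt_eqF.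
    rewrite e; apply: ler_wpM2l => //; apply: divr_ge0 => //; exact: ltW.
  have e : n / 2 * (1 + 2 * K * T) = n / 2 + n * K * T by field.
  rewrite e in s4.
  have : E x0 t0 = P * Hx by [].
  lra.
have hT : E x T <= n / 2 + n * K * T.
  apply: le_trans bound; apply: gmax; rewrite in_itv /=; apply/andP; split => //.
  exact: ltW.
have hG := GammaPsiE adj w mu H1 (f := fun y => u y T) (x := x) (lt0r_neq0 (upos x T T0)).
rewrite hG; move: hT; rewrite /E /eps /Ah => hT.
exact: (@fin R _ _ _ _ _ a0 a1 n0 K0 T0 hT).
Qed.
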